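(* Let $R$ be a commutative ring with $\mathbb{Q}\subseteq R$. Let $\mathcal{E}$ (resp. $\mathcal{F}$) be a finitely generated projective module over a commutative unital $R$-algebra $\mathcal{A}$ (resp. $\mathcal{B}$), with a symmetric, strongly nondegenerate, full inner product $\langle\cdot,\cdot\rangle_{\mathcal{E}}$ (resp. $\langle\cdot,\cdot\rangle_{\mathcal{F}}$). Let $\phi:\mathcal{A}\to\mathcal{B}$ be an algebra isomorphism. Let $\Phi:\mathcal{E}\to\mathcal{F}$ be an $R$-linear bijection along $\phi$, i.e. $\Phi(ax)=\phi(a)\Phi(x)$, which is isometric: $\phi(\langle x,y\rangle_{\mathcal{E}})=\langle\Phi(x),\Phi(y)\rangle_{\mathcal{F}}$ for all $x,y\in\mathcal{E}$. Let $\Psi=\Phi^{-1}$. Define $\Phi_*:\mathcal{C}^\bullet(\mathcal{E})\to\mathcal{C}^\bullet(\mathcal{F})$ as follows: - $\Phi_*(a)=\phi(a)$ for $a\in\mathcal{A}$; - $\Phi_*(x)=\Phi(x)$ for $x\in\mathcal{E}$; - $(\Phi_*\mathsf{C})(y_1,\dots,y_{r-1})=\Phi\big(\mathsf{C}(\Psi(y_1),\dots,\Psi(y_{r-1}))\big)$ for $\mathsf{C}\in\mathcal{C}^r(\mathcal{E})$ with $r\ge2$. Then $\Phi_*$ is an isomorphism of graded Poisson algebras $(\mathcal{C}^\bullet(\mathcal{E}),[\cdot,\cdot],\wedge)\to(\mathcal{C}^\bullet(\mathcal{F}),[\cdot,\cdot],\wedge)$.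
   Context: Strongly nondegenerate: the induced map from the module to its $\operatorname{Hom}$-dual is an isomorphism. Full: every algebra element is a finite sum $\sum_i\langle x_i,y_i\rangle$. $\operatorname{Der}(\mathcal{A})$: $R$-linear derivations. $\mathcal{C}^0(\mathcal{E})=\mathcal{A}$ and $\mathcal{C}^1(\mathcal{E})=\mathcal{E}$. For $r\ge2$, $\mathcal{C}^r(\mathcal{E})$ is the set of $\mathsf{C}\in\operatorname{Hom}_R(\mathcal{E}^{\otimes_R(r-1)},\mathcal{E})$ admitting an $R$-multilinear symbol $\sigma_{\mathsf{C}}:\mathcal{E}^{\otimes(r-2)}\to\operatorname{Der}(\mathcal{A})$ with two properties: (1) $\sigma_{\mathsf{C}}(x_1,\dots,x_{r-2})\langle u,w\rangle=\langle\mathsf{C}(x_1,\dots,x_{r-2},u),w\rangle+\langle u,\mathsf{C}(x_1,\dots,x_{r-2},w)\rangle$; (2) for $r\ge3$ and $1\le i\le r-2$, $\langle\mathsf{C}(\dots,x_i,x_{i+1},\dots)+\mathsf{C}(\dots,x_{i+1},x_i,\dots),u\rangle=\sigma_{\mathsf{C}}(x_1,\dots,\widehat{x_i},\widehat{x_{i+1}},\dots,x_{r-1},u)\langle x_i,x_{i+1}\rangle$. The same definitions apply to $\mathcal{F}$ over $\mathcal{B}$. $i_x\mathsf{C}$ inserts $x$ in the first argument. $[\cdot,\cdot]$ is the unique $R$-bilinear graded skew-symmetric map $\mathcal{C}^r\times\mathcal{C}^s\to\mathcal{C}^{r+s-2}$ with: - $[a,b]=0$ and $[a,x]=0=[x,a]$;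 - $[x,y]=\langle x,y\rangle$; - $[\mathsf{D},a]=\sigma_{\mathsf{D}}(a)=-[a,\mathsf{D}]$ for $\mathsf{D}\in\mathcal{C}^2$; - $[\mathsf{C},x]=i_x\mathsf{C}=(-1)^{r+1}[x,\mathsf{C}]$ for $r\ge2$; - $[[\mathsf{C}_1,\mathsf{C}_2],x]=(-1)^s[[\mathsf{C}_1,x],\mathsf{C}_2]+[\mathsf{C}_1,[\mathsf{C}_2,x]]$. $\wedge$ is the unique degree-$0$ $R$-bilinear product with $a\wedge b=ab$, $a\wedge x=ax=x\wedge a$, and $[\mathsf{C}_1\wedge\mathsf{C}_2,x]=(-1)^s[\mathsf{C}_1,x]\wedge\mathsf{C}_2+\mathsf{C}_1\wedge[\mathsf{C}_2,x]$. An isomorphism of graded Poisson algebras is a bijective homogeneous degree-$0$ map compatible with $\wedge$ and $[\cdot,\cdot]$. *)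

(* Defs.v *)
From HB Require Import structures.
From mathcomp Require Import all_boot all_order all_algebra.
Set Implicit Arguments. Unset Strict Implicit. Unset Printing Implicit Defensive.
Import Order.TTheory GRing.Theory Num.Theory.
Local Open Scope ring_scope.

Section Cochains.
Variables (R : comNzRingType) (A : comAlgType R) (E : lmodType A).
Variable ip : E -> E -> A.

Definition rsc (r : R) (x : E) : E := r%:A *: x.

Definition A_linear (V W : lmodType A) (f : V -> W) : Prop :=
  forall (a : A) x y, f (a *: x + y) = a *: f x + f y.

(* finitely generated projective: a direct summand of a free module A^n *)
Definition fg_projective : Prop :=
  exists n (i : E -> 'rV[A]_n) (p : 'rV[A]_n -> E),
    [/\ A_linear i, A_linear p & forall x, p (i x) = x].

Definition ip_bilinear : Prop :=
  (forall (a : A) x y z, ip (a *: x + y) z = a * ip x z + ip y z) /\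
  (forall (a : A) x y z, ip z (a *: x + y) = a * ip z x + ip z y).

Definition ip_symmetric : Prop := forall x y, ip x y = ip y x.

(* x |-> <x, .> is a bijection E -> Hom_A(E, A) *)
Definition strongly_nondegenerate : Prop :=
  (forall x, (forall y, ip x y = 0) -> x = 0) /\
  (forall f : E -> A, (forall (a : A) x y, f (a *: x + y) = a * f x + f y) ->
     exists x, forall y, f y = ip x y).

Definition ip_full : Prop :=
  forall a : A, exists s : seq (E * E), a = \sum_(p <- s) ip p.1 p.2.

Definition good_inner_product : Prop :=
  [/\ ip_bilinear, ip_symmetric, strongly_nondegenerate & ip_full].

Definition upd k (v : {ffun 'I_k -> E}) (i : 'I_k) (x : E) : {ffun 'I_k -> E} :=
  [ffun j => if j == i then x else v j].
Definition fseq k (v : {ffun 'I_k -> E}) : seq E := [seq v i | i <- enum 'I_k].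
Definition of_seq k (s : seq E) : {ffun 'I_k -> E} := [ffun i : 'I_k => nth 0 s i].
Definition snoc k (v : {ffun 'I_k -> E}) (u : E) : {ffun 'I_k.+1 -> E} :=
  of_seq k.+1 (rcons (fseq v) u).
Definition fcons k (x : E) (v : {ffun 'I_k -> E}) : {ffun 'I_k.+1 -> E} :=
  of_seq k.+1 (x :: fseq v).
Definition swapadj k (v : {ffun 'I_k -> E}) (j : nat) : {ffun 'I_k -> E} :=
  let s := fseq v in
  of_seq k (take j s ++ [:: nth 0 s j.+1; nth 0 s j] ++ drop j.+2 s).
Definition dropadj k (v : {ffun 'I_k.+2 -> E}) (j : nat) : {ffun 'I_k -> E} :=
  let s := fseq v in of_seq k (take j s ++ drop j.+2 s).

Definition multilinE k (f : {ffun 'I_k -> E} -> E) : Prop :=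
  forall v i (r : R) x y,
    f (upd v i (rsc r x + y)) = rsc r (f (upd v i x)) + f (upd v i y).
Definition multilinA k (f : {ffun 'I_k -> E} -> A) : Prop :=
  forall v i (r : R) x y,
    f (upd v i (rsc r x + y)) = r *: f (upd v i x) + f (upd v i y).

Definition isDer (D : A -> A) : Prop :=
  (forall (r : R) a b, D (r *: a + b) = r *: D a + D b) /\
  (forall a b, D (a * b) = D a * b + a * D b).

(* property (2), for r = m+3 >= 3 *)
Definition symbol_cond2 m (C : {ffun 'I_m.+2 -> E} -> E)
    (sigma : {ffun 'I_m.+1 -> E} -> A -> A) : Prop :=
  forall (v : {ffun 'I_m.+2 -> E}) (j : nat) (u : E), (j < m.+1)%N ->
    ip (C v + C (swapadj v j)) u =
    sigma (snoc (dropadj v j) u) (ip (nth 0 (fseq v) j) (nth 0 (fseq v) j.+1)).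

(* sigma is a symbol for C in C^{k+2}(E) *)
Definition isSymbol k (C : {ffun 'I_k.+1 -> E} -> E)
    (sigma : {ffun 'I_k -> E} -> A -> A) : Prop :=
  [/\ forall a, multilinA (fun v => sigma v a),
      forall v, isDer (sigma v),
      forall v u w, sigma v (ip u w) = ip (C (snoc v u)) w + ip u (C (snoc v w)) &
      match k return ({ffun 'I_k.+1 -> E} -> E) -> ({ffun 'I_k -> E} -> A -> A) -> Prop with
      | 0 => fun _ _ => True
      | m.+1 => fun C s => symbol_cond2 C s
      end C sigma].

(* the ambient type of degree-n cochains: C^0 = A, C^1 = E,
   C^{k+2} inside maps E^{k+1} -> E *)
Definition cochain (n : nat) : Type :=
  match n with
  | 0 => A
  | 1 => E
  | k.+2 => {ffun 'I_k.+1 -> E} -> E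
  end.

Definition isCochain n : cochain n -> Prop :=
  match n return cochain n -> Prop with
  | 0 => fun _ => True
  | 1 => fun _ => True
  | k.+2 => fun C => multilinE C /\ exists sigma, isSymbol C sigma
  end.

Definition czero n : cochain n :=
  match n return cochain n with
  | 0 => (0 : A) | 1 => (0 : E) | k.+2 => fun _ => 0 end.
Definition cadd n : cochain n -> cochain n -> cochain n :=
  match n return cochain n -> cochain n -> cochain n with
  | 0 => fun a b : A => a + b
  | 1 => fun x y : E => x + y
  | k.+2 => fun C D v => C v + D v
  end.
Definition cscale n (r : R) : cochain n -> cochain n :=
  match n return cochain n -> cochain n with
  | 0 => fun a : A => r *: a
  | 1 => fun x : E => rsc r x
  | k.+2 => fun C v => rsc r (C v)
  end.

Definition iins k (x : E) : cochain k.+2 -> cochain k.+1 :=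
  match k return cochain k.+2 -> cochain k.+1 with
  | 0 => fun C => C (fcons x (of_seq 0 [::]))
  | m.+1 => fun C v => C (fcons x v)
  end.

(* A bilinear operation on homogeneous cochains, with an explicit target
   degree n: op r s n c d is the degree-n component of op(c, d). *)
Definition gop := forall r s n, cochain r -> cochain s -> cochain n.

Record isBracket (br : gop) : Prop := {
  br_closed : forall r s n c d, isCochain c -> isCochain d -> isCochain (br r s n c d);
  br_graded : forall r s n c d, isCochain c -> isCochain d ->
      (n != r + s - 2)%N || (r + s < 2)%N -> br r s n c d = czero n;
  br_linl : forall r s n (a : R) c c' d, isCochain c -> isCochain c' -> isCochain d ->
      br r s n (cadd (cscale a c) c') d = cadd (cscale a (br r s n c d)) (br r s n c' d);
  br_linr : forall r s n (a : R) c d d', isCochain c -> isCochain d -> isCochain d' ->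
      br r s n c (cadd (cscale a d) d') = cadd (cscale a (br r s n c d)) (br r s n c d');
  br_skew : forall r s n c d, isCochain c -> isCochain d ->
      br r s n c d = cscale (- (-1) ^+ (r * s)%N) (br s r n d c);
  br_EE : forall x y : E, br 1 1 0 x y = ip x y;
  br_symbol : forall (D : cochain 2) (a : A) sigma, isCochain D -> isSymbol D sigma ->
      br 2 0 0 D a = sigma (of_seq 0 [::]) a /\ br 0 2 0 a D = - sigma (of_seq 0 [::]) a;
  br_ins : forall k (C : cochain k.+2) (x : E), isCochain C ->
      br k.+2 1 k.+1 C x = iins x C /\
      br 1 k.+2 k.+1 x C = cscale ((-1) ^+ (k.+3)) (iins x C);
  br_jacobi : forall r s (c : cochain r) (d : cochain s) (x : E),
      isCochain c -> isCochain d -> (3 <= r + s)%N ->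
      br (r + s - 2)%N 1 (r + s - 3)%N (br r s (r + s - 2)%N c d) x =
      cadd (cscale ((-1) ^+ s) (br (r - 1)%N s (r + s - 3)%N (br r 1 (r - 1)%N c x) d))
           (br r (s - 1)%N (r + s - 3)%N c (br s 1 (s - 1)%N d x))
}.

Record isWedge (br : gop) (wd : gop) : Prop := {
  wd_closed : forall r s n c d, isCochain c -> isCochain d -> isCochain (wd r s n c d);
  wd_graded : forall r s n c d, isCochain c -> isCochain d ->
      (n != r + s)%N -> wd r s n c d = czero n;
  wd_linl : forall r s n (a : R) c c' d, isCochain c -> isCochain c' -> isCochain d ->
      wd r s n (cadd (cscale a c) c') d = cadd (cscale a (wd r s n c d)) (wd r s n c' d);
  wd_linr : forall r s n (a : R) c d d', isCochain c -> isCochain d -> isCochain d' ->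
      wd r s n c (cadd (cscale a d) d') = cadd (cscale a (wd r s n c d)) (wd r s n c d');
  wd_AA : forall a b : A, wd 0 0 0 a b = (a * b : A);
  wd_AE : forall (a : A) (x : E), wd 0 1 1 a x = (a *: x : E);
  wd_EA : forall (x : E) (a : A), wd 1 0 1 x a = (a *: x : E);
  wd_leibniz : forall r s (c : cochain r) (d : cochain s) (x : E),
      isCochain c -> isCochain d ->
      br (r + s)%N 1 (r + s - 1)%N (wd r s (r + s)%N c d) x =
      cadd (cscale ((-1) ^+ s) (wd (r - 1)%N s (r + s - 1)%N (br r 1 (r - 1)%N c x) d))
           (wd r (s - 1)%N (r + s - 1)%N c (br s 1 (s - 1)%N d x))
}.

End Cochains.

Section Transport.
Variables (R : comNzRingType) (A B : comAlgType R) (E : lmodType A) (F : lmodType B).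

Definition R_algebra_iso (phi : A -> B) : Prop :=
  [/\ forall a b, phi (a + b) = phi a + phi b,
      forall a b, phi (a * b) = phi a * phi b,
      phi 1 = 1,
      forall (r : R) a, phi (r *: a) = r *: phi a &
      bijective phi].

Variables (phi : A -> B) (Phi : E -> F) (Psi : F -> E).

Definition phistar n : cochain E n -> cochain F n :=
  match n return cochain E n -> cochain F n with
  | 0 => fun a : A => phi a
  | 1 => fun x : E => Phi x
  | k.+2 => fun C w => Phi (C [ffun i => Psi (w i)])
  end.

Variables (ipE : E -> E -> A) (ipF : F -> F -> B).

Definition graded_poisson_iso (f : forall n, cochain E n -> cochain F n)
    (brE wdE : gop E) (brF wdF : gop F) : Prop :=
  [/\ forall n (c : cochain E n), isCochain ipE c -> isCochain ipF (f n c),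
      forall n (c c' : cochain E n), isCochain ipE c -> isCochain ipE c' ->
        f n c = f n c' -> c = c',
      forall n (d : cochain F n), isCochain ipF d ->
        exists2 c : cochain E n, isCochain ipE c & f n c = d,
      forall r s n (c : cochain E r) (d : cochain E s),
        isCochain ipE c -> isCochain ipE d ->
        f n (brE r s n c d) = brF r s n (f r c) (f s d) &
      forall r s n (c : cochain E r) (d : cochain E s),
        isCochain ipE c -> isCochain ipE d ->
        f n (wdE r s n c d) = wdF r s n (f r c) (f s d)].

End Transport.

(* Main.v *)
Require Import Defs.
From HB Require Import structures.
From mathcomp Require Import all_boot all_order all_algebra.
From Stdlib Require Import FunctionalExtensionality.
From mathcomp Require Import zify.
Import GRing.Theory.
Local Open Scope ring_scope.

Set Implicit Arguments. Unset Strict Implicit. Unset Printing Implicit Defensive.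



Section Maps.
Variables (R : comNzRingType) (A B : comAlgType R) (E : lmodType A) (F : lmodType B).
Variable f : E -> F.
Hypothesis f0 : f 0 = 0.

Definition mapf k (v : {ffun 'I_k -> E}) : {ffun 'I_k -> F} := [ffun i => f (v i)].

Lemma nth_map0 (s : seq E) i : nth 0 (map f s) i = f (nth 0 s i).
Proof. by elim: s i => [|x s IH] [|i] //=. Qed.

Lemma fseq_map k (v : {ffun 'I_k -> E}) : fseq (mapf v) = map f (fseq v).
Proof. by rewrite /fseq -map_comp; apply: eq_map => i; rewrite /= ffunE. Qed.

Lemma of_seq_map k (s : seq E) : mapf (of_seq k s) = of_seq k (map f s).
Proof. by apply/ffunP => i; rewrite !ffunE nth_map0. Qed.

Lemma upd_map k (v : {ffun 'I_k -> E}) i x : mapf (upd v i x) = upd (mapf v) i (f x).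
Proof. by apply/ffunP => j; rewrite !ffunE; case: (j == i). Qed.

Lemma snoc_map k (v : {ffun 'I_k -> E}) u : mapf (snoc v u) = snoc (mapf v) (f u).
Proof. by rewrite /snoc of_seq_map map_rcons fseq_map. Qed.

Lemma fcons_map k (v : {ffun 'I_k -> E}) u : mapf (fcons u v) = fcons (f u) (mapf v).
Proof. by rewrite /fcons of_seq_map /= fseq_map. Qed.

Lemma swapadj_map k (v : {ffun 'I_k -> E}) j : mapf (swapadj v j) = swapadj (mapf v) j.
Proof.
by rewrite /swapadj of_seq_map !map_cat map_take map_drop /= !fseq_map !nth_map0.
Qed.

Lemma dropadj_map k (v : {ffun 'I_k.+2 -> E}) j : mapf (dropadj v j) = dropadj (mapf v) j.
Proof. by rewrite /dropadj of_seq_map map_cat map_take map_drop fseq_map. Qed.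

Lemma nth_fseq_map k (v : {ffun 'I_k -> E}) j : nth 0 (fseq (mapf v)) j = f (nth 0 (fseq v) j).
Proof. by rewrite fseq_map nth_map0. Qed.
End Maps.



Section Part1.
Variables (R : comNzRingType) (A B : comAlgType R) (E : lmodType A) (F : lmodType B).
Variables (ipE : E -> E -> A) (ipF : F -> F -> B).
Variables (phi : A -> B) (g : B -> A) (Phi : E -> F) (Psi : F -> E).
Hypotheses (phi_add : forall a b, phi (a + b) = phi a + phi b)
  (phi_mul : forall a b, phi (a * b) = phi a * phi b)
  (phi_sc : forall (r : R) a, phi (r *: a) = r *: phi a)
  (phiK : cancel phi g) (gK : cancel g phi)
  (Phi_add : forall x y, Phi (x + y) = Phi x + Phi y)
  (Phi_R : forall (r : R) x, Phi (rsc r x) = rsc r (Phi x))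
  (PhiK : cancel Phi Psi) (PsiK : cancel Psi Phi)
  (Phi_isom : forall x y, phi (ipE x y) = ipF (Phi x) (Phi y)).

Lemma Psi_add x y : Psi (x + y) = Psi x + Psi y.
Proof. by apply: (can_inj PhiK); rewrite Phi_add !PsiK. Qed.
Lemma Psi_R r x : Psi (rsc r x) = rsc r (Psi x).
Proof. by apply: (can_inj PhiK); rewrite Phi_R !PsiK. Qed.
Lemma Phi0 : Phi 0 = 0.
Proof. by apply: (addrI (Phi 0)); rewrite -Phi_add !addr0. Qed.
Lemma Psi0 : Psi 0 = 0.
Proof. by rewrite -Phi0 PhiK. Qed.
Lemma g_isom x y : g (ipF x y) = ipE (Psi x) (Psi y).
Proof. by rewrite -{1}(PsiK x) -{1}(PsiK y) -Phi_isom phiK. Qed.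
Lemma g_add a b : g (a + b) = g a + g b.
Proof. by apply: (can_inj phiK); rewrite phi_add !gK. Qed.
Lemma g_mul a b : g (a * b) = g a * g b.
Proof. by apply: (can_inj phiK); rewrite phi_mul !gK. Qed.
Lemma g_sc (r : R) a : g (r *: a) = r *: g a.
Proof. by apply: (can_inj phiK); rewrite phi_sc !gK. Qed.

Lemma ps_symbol k (C : {ffun 'I_k.+1 -> E} -> E) sigma :
  isSymbol ipE C sigma ->
  isSymbol ipF (fun w => Phi (C (mapf Psi w)))
    (fun w b => phi (sigma (mapf Psi w) (g b))).
Proof.
case=> hsA hsD hs1 hs2; split.
- move=> a v i r x y /=.
  rewrite !upd_map Psi_add Psi_R hsA phi_add phi_sc //.
- move=> v; split => [r a b|a b]; first by rewrite g_add g_sc (proj1 (hsD _)) phi_add phi_sc.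
  by rewrite g_mul (proj2 (hsD _)) phi_add !phi_mul !gK.
- move=> v u w; rewrite g_isom hs1 phi_add !Phi_isom !PsiK.
  by rewrite -!snoc_map ?Psi0.
case: k C sigma hsA hsD hs1 hs2 => // m C sigma _ _ _ hs2 v j u hj /=.
rewrite -Phi_add -{1}(PsiK u) -Phi_isom.
rewrite swapadj_map ?Psi0 //.
rewrite hs2 // g_isom -!nth_fseq_map ?Psi0 //.
by rewrite snoc_map ?Psi0 // dropadj_map ?Psi0.
Qed.

Lemma phistar_cochain n (c : cochain E n) :
  isCochain ipE c -> isCochain ipF (phistar phi Phi Psi c).
Proof.
case: n c => [|[|k]] C //= [hml [sigma hs]]; split.
  move=> v i r x y; rewrite -[in RHS]Phi_R -Phi_add.
  have -> : [ffun j => Psi (upd v i (rsc r x + y) j)] =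
            upd (mapf Psi v) i (rsc r (Psi x) + Psi y).
    by rewrite -Psi_R -Psi_add -upd_map.
  by rewrite hml -!upd_map.
exists (fun w b => phi (sigma (mapf Psi w) (g b))); exact: (ps_symbol hs).
Qed.
End Part1.



Section Gen.
Variables (R : comNzRingType) (A : comAlgType R) (E : lmodType A) (ip : E -> E -> A).

Lemma cneg n (Y : cochain E n) : cadd (cscale (-1) Y) Y = czero E n.
Proof.
case: n Y => [|[|k]] Y /=; first by rewrite scaleN1r addNr.
  by rewrite /rsc scaleN1r scaleN1r addNr.
by apply: functional_extensionality => v; rewrite /rsc scaleN1r scaleN1r addNr.
Qed.

Lemma br_zero_l (br : gop E) : isBracket ip br ->
  forall s n (d : cochain E s), isCochain ip d -> br 0%N s n (0 : A) d = czero E n.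
Proof.
move=> hb s n d hd.
have := @br_linl _ _ _ _ _ hb 0%N s n (-1) (0 : A) (0 : A) d I I hd.
by rewrite /= scaler0 addr0 cneg.
Qed.

Lemma br_zero_r (br : gop E) : isBracket ip br ->
  forall r n (c : cochain E r), isCochain ip c -> br r 0%N n c (0 : A) = czero E n.
Proof.
move=> hb r n c hc.
have := @br_linr _ _ _ _ _ hb r 0%N n (-1) c (0 : A) (0 : A) hc I I.
by rewrite /= scaler0 addr0 cneg.
Qed.

Lemma wd_zero_l (br wd : gop E) : isWedge ip br wd ->
  forall s n (d : cochain E s), isCochain ip d -> wd 0%N s n (0 : A) d = czero E n.
Proof.
move=> hb s n d hd.
have := @wd_linl _ _ _ _ _ _ hb 0%N s n (-1) (0 : A) (0 : A) d I I hd.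
by rewrite /= scaler0 addr0 cneg.
Qed.

Lemma wd_zero_r (br wd : gop E) : isWedge ip br wd ->
  forall r n (c : cochain E r), isCochain ip c -> wd r 0%N n c (0 : A) = czero E n.
Proof.
move=> hb r n c hc.
have := @wd_linr _ _ _ _ _ _ hb r 0%N n (-1) c (0 : A) (0 : A) hc I I.
by rewrite /= scaler0 addr0 cneg.
Qed.

Lemma fcons_split k (v : {ffun 'I_k.+1 -> E}) :
  v = fcons (v ord0) [ffun i : 'I_k => v (lift ord0 i)].
Proof.
apply/ffunP => i; rewrite ffunE /=.
case: i => [[|i] hi] /=; first by congr (v _); apply: val_inj.
have hk : (i < k)%N by [].
rewrite /fseq (nth_map (Ordinal hk)) ?size_enum_ord // ffunE; congr (v _).
by apply: val_inj => /=; rewrite /bump /= nth_enum_ord.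
Qed.

End Gen.



Section Main.
Variables (R : comNzRingType) (A B : comAlgType R) (E : lmodType A) (F : lmodType B).
Variables (ipE : E -> E -> A) (ipF : F -> F -> B).
Variables (phi : A -> B) (g : B -> A) (Phi : E -> F) (Psi : F -> E).
Hypotheses (phi_add : forall a b, phi (a + b) = phi a + phi b)
  (phi_mul : forall a b, phi (a * b) = phi a * phi b)
  (phi_sc : forall (r : R) a, phi (r *: a) = r *: phi a)
  (phiK : cancel phi g) (gK : cancel g phi)
  (Phi_add : forall x y, Phi (x + y) = Phi x + Phi y)
  (Phi_R : forall (r : R) x, Phi (rsc r x) = rsc r (Phi x))
  (Phi_along : forall (a : A) x, Phi (a *: x) = phi a *: Phi x)
  (PhiK : cancel Phi Psi) (PsiK : cancel Psi Phi)
  (Phi_isom : forall x y, phi (ipE x y) = ipF (Phi x) (Phi y))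
  (ndF : forall x, (forall y, ipF x y = 0) -> x = 0)
  (bilF : forall (a : B) x y z, ipF (a *: x + y) z = a * ipF x z + ipF y z).
Unset Implicit Arguments.
Variables (brE wdE : gop E) (brF wdF : gop F).
Set Implicit Arguments.
Hypotheses (hbrE : isBracket ipE brE) (hwdE : isWedge ipE brE wdE)
  (hbrF : isBracket ipF brF) (hwdF : isWedge ipF brF wdF).

Notation ps := (phistar phi Phi Psi).

Let Phi0 := Phi0 Phi_add.
Let Psi0 := Psi0 Phi_add PhiK.
Lemma phi0 : phi 0 = 0.
Proof. by apply: (addrI (phi 0)); rewrite -phi_add !addr0. Qed.
Lemma phiN a : phi (- a) = - phi a.
Proof. by apply: (addrI (phi a)); rewrite -phi_add !subrr phi0. Qed.

Lemma ps_cochain n (c : cochain E n) : isCochain ipE c -> isCochain ipF (ps c).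
Proof. exact: (phistar_cochain phi_add phi_mul phi_sc phiK gK Phi_add Phi_R PhiK PsiK Phi_isom). Qed.

Lemma ps_czero n : ps (czero E n) = czero F n.
Proof.
case: n => [|[|k]] /=; [exact: phi0 | exact: Phi0 |].
by apply: functional_extensionality => w.
Qed.

Lemma ps_lin n a (c c' : cochain E n) :
  ps (cadd (cscale a c) c') = cadd (cscale a (ps c)) (ps c').
Proof.
case: n c c' => [|[|k]] c c' /=; first by rewrite phi_add phi_sc.
  by rewrite Phi_add Phi_R.
by apply: functional_extensionality => w; rewrite Phi_add Phi_R.
Qed.

Lemma ps_iins k x (C : cochain E k.+2) : ps (iins x C) = iins (Phi x) (ps C).
Proof.
case: k C => [|k] C /=.
  rewrite -[RHS]/(Phi (C (mapf Psi (fcons (Phi x) (of_seq 0 [::]))))).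
  by rewrite (fcons_map Psi0) PhiK (of_seq_map Psi0).
apply: functional_extensionality => w.
rewrite -[RHS]/(Phi (C (mapf Psi (fcons (Phi x) w)))).
by rewrite (fcons_map Psi0) PhiK.
Qed.

Lemma baseB t (c : cochain E t) x : isCochain ipE c ->
  ps (brE t 1 (t - 1)%N c x) = brF t 1 (t - 1)%N (ps c) (Phi x).
Proof.
case: t c => [|[|k]] c hc.
- rewrite (br_graded hbrE (d:=x) hc I) // (br_graded hbrF (d:=(Phi x : cochain F 1)) (ps_cochain hc) I) // ps_czero //.
- have e1 := br_EE hbrE c x; have e2 := br_EE hbrF (Phi c) (Phi x).
  rewrite /= in e1 e2 *. by rewrite e1 e2 Phi_isom.
- have e1 := proj1 (br_ins hbrE x hc); have e2 := proj1 (br_ins hbrF (Phi x) (ps_cochain hc)).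
  change (ps (brE k.+2 1 k.+1 c x) = brF k.+2 1 k.+1 (ps c) (Phi x)).
  rewrite e1 e2. exact: ps_iins.
Qed.

Lemma detL m (X : cochain E m) (Y : cochain F m) : (0 < m)%N ->
  isCochain ipE X -> isCochain ipF Y ->
  (forall x, ps (brE m 1 m.-1 X x) = brF m 1 m.-1 Y (Phi x)) -> ps X = Y.
Proof.
case: m X Y => [|[|k]] X Y // _ hX hY h.
- change (Phi X = Y). apply/eqP; rewrite -subr_eq0; apply/eqP/ndF => z.
  have e := h (Psi z).
  have e1 := br_EE hbrE X (Psi z); have e2 := br_EE hbrF Y (Phi (Psi z)).
  change (phi (brE 1 1 0 X (Psi z)) = brF 1 1 0 Y (Phi (Psi z))) in e.
  rewrite e1 e2 Phi_isom PsiK in e.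
  by rewrite addrC -scaleN1r bilF e mulN1r addNr.
- have h' : forall x, iins (Phi x) (ps X) = iins (Phi x) Y.
    move=> x; have e := h x.
    change (ps (brE k.+2 1 k.+1 X x) = brF k.+2 1 k.+1 Y (Phi x)) in e.
    by move: e; rewrite (proj1 (br_ins hbrE x hX)) (proj1 (br_ins hbrF (Phi x) hY)) ps_iins.
  apply: functional_extensionality => w.
  rewrite (fcons_split w).
  have := h' (Psi (w ord0)); rewrite PsiK.
  case: k X Y hX hY h h' w => [|k] X Y _ _ _ _ w /=.
    have -> : [ffun i : 'I_0 => w (lift ord0 i)] = of_seq 0 [::].
      by apply/ffunP => -[].
    by [].
  by move/(congr1 (fun f => f [ffun i => w (lift ord0 i)])).
Qed.

Let psym := ps_symbol phi_add phi_mul phi_sc phiK gK Phi_add Phi_R PhiK PsiK Phi_isom.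

Lemma brC N : forall r s, (r + s <= N)%N -> forall n (c : cochain E r) (d : cochain E s),
  isCochain ipE c -> isCochain ipE d -> ps (brE r s n c d) = brF r s n (ps c) (ps d).
Proof.
elim: N => [|N IH] r s hN n c d hc hd;
have hc' := ps_cochain hc; have hd' := ps_cochain hd;
(case: (boolP ((n != r + s - 2)%N || (r + s < 2)%N)) => hg;
  [by rewrite (br_graded hbrE hc hd hg) (br_graded hbrF hc' hd' hg) ps_czero|]);
move: hg; rewrite negb_or negbK -leqNgt => /andP [/eqP -> h2].
  by move: hN; rewrite leqn0 => /eqP e; rewrite e in h2.
rewrite leq_eqVlt in h2; case/orP: h2 => [/eqP e2|h3].
  case: r c hc hc' hN e2 => [|[|[|r]]] c hc hc' hN e2.
  - rewrite add0n in e2; subst s.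
    change (phi (brE 0 2 0 c d) = brF 0 2 0 (phi c) (ps d)).
    have [_ [sigma hs]] := hd.
    rewrite (proj2 (br_symbol hbrE c hd hs)) (proj2 (br_symbol hbrF (phi c) hd' (psym hs))).
    by rewrite phiN phiK (of_seq_map Psi0).
  - have e1 : s = 1%N by lia.
    subst s.
    change (phi (brE 1 1 0 c d) = brF 1 1 0 (Phi c) (Phi d)).
    by rewrite (br_EE hbrE) (br_EE hbrF) Phi_isom.
  - have e1 : s = 0%N by lia.
    subst s.
    change (phi (brE 2 0 0 c d) = brF 2 0 0 (ps c) (phi d)).
    have [_ [sigma hs]] := hc.
    rewrite (proj1 (br_symbol hbrE d hc hs)) (proj1 (br_symbol hbrF (phi d) hc' (psym hs))).
    by rewrite phiK (of_seq_map Psi0).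
  - by lia.
have key : forall x, ps (brE (r + s - 2)%N 1 (r + s - 3)%N (brE r s (r + s - 2)%N c d) x) =
    brF (r + s - 2)%N 1 (r + s - 3)%N (brF r s (r + s - 2)%N (ps c) (ps d)) (Phi x).
  move=> x.
  rewrite (br_jacobi hbrE x hc hd h3) (br_jacobi hbrF (Phi x) hc' hd' h3) ps_lin.
  congr (cadd (cscale _ _) _).
    case: r c hc hc' hN h3 => [|r] c hc hc' hN h3.
      rewrite (br_graded hbrE (d:=x) hc I) // (br_graded hbrF (d:=(Phi x : cochain F 1)) hc' I) //.
      by rewrite (br_zero_l hbrE _ hd) (br_zero_l hbrF _ hd') ps_czero.
    rewrite (IH _ _ _ _ _ _ (br_closed hbrE (d:=x) _ hc I) hd); last first.
      by move: hN; rewrite subn1 /= addSn.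
    by rewrite baseB.
  case: s d hd hd' hN h3 => [|s] d hd hd' hN h3.
    rewrite (br_graded hbrE (d:=x) hd I) // (br_graded hbrF (d:=(Phi x : cochain F 1)) hd' I) //.
    by rewrite (br_zero_r hbrE _ hc) (br_zero_r hbrF _ hc') ps_czero.
  rewrite (IH _ _ _ _ _ _ hc (br_closed hbrE (d:=x) _ hd I)); last first.
    by move: hN; rewrite subn1 /= addnS.
  by rewrite baseB.
have e : (r + s - 3 = (r + s - 2).-1)%N by rewrite -subn1 -subnDA.
rewrite e in key.
apply: detL key; last by apply: br_closed.
  by rewrite subn_gt0.
by apply: br_closed.
Qed.

Lemma wdC N : forall r s, (r + s <= N)%N -> forall n (c : cochain E r) (d : cochain E s),
  isCochain ipE c -> isCochain ipE d -> ps (wdE r s n c d) = wdF r s n (ps c) (ps d).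
Proof.
elim: N => [|N IH] r s hN n c d hc hd;
have hc' := ps_cochain hc; have hd' := ps_cochain hd;
(case: (boolP (n != r + s)%N) => hg;
  [by rewrite (wd_graded hwdE hc hd hg) (wd_graded hwdF hc' hd' hg) ps_czero|]);
move: hg; rewrite negbK => /eqP ->.
  case: r c hc hc' hN => [|r] c hc hc' hN; last by [].
  case: s d hd hd' hN => [|s] d hd hd' hN; last by [].
  change (phi (wdE 0 0 0 c d) = wdF 0 0 0 (phi c) (phi d)).
  by rewrite (wd_AA hwdE) (wd_AA hwdF) phi_mul.
have [e0|[e1|h2]] : (r + s = 0)%N \/ (r + s = 1)%N \/ (2 <= r + s)%N.
  by lia.
  case: r c hc hc' hN e0 => [|r] c hc hc' hN e0; last by [].
  case: s d hd hd' hN e0 => [|s] d hd hd' hN e0; last by [].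
  change (phi (wdE 0 0 0 c d) = wdF 0 0 0 (phi c) (phi d)).
  by rewrite (wd_AA hwdE) (wd_AA hwdF) phi_mul.
  case: r c hc hc' hN e1 => [|[|r]] c hc hc' hN e1.
  - rewrite add0n in e1; subst s.
    change (Phi (wdE 0 1 1 c d) = wdF 0 1 1 (phi c) (Phi d)).
    by rewrite (wd_AE hwdE) (wd_AE hwdF) Phi_along.
  - have e2 : s = 0%N by lia.
    subst s.
    change (Phi (wdE 1 0 1 c d) = wdF 1 0 1 (Phi c) (phi d)).
    by rewrite (wd_EA hwdE) (wd_EA hwdF) Phi_along.
  - by lia.
have key : forall x, ps (brE (r + s)%N 1 (r + s - 1)%N (wdE r s (r + s)%N c d) x) =
    brF (r + s)%N 1 (r + s - 1)%N (wdF r s (r + s)%N (ps c) (ps d)) (Phi x).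
  move=> x.
  rewrite (wd_leibniz hwdE x hc hd) (wd_leibniz hwdF (Phi x) hc' hd') ps_lin.
  congr (cadd (cscale _ _) _).
    case: r c hc hc' hN h2 => [|r] c hc hc' hN h2.
      rewrite (br_graded hbrE (d:=x) hc I) // (br_graded hbrF (d:=(Phi x : cochain F 1)) hc' I) //.
      by rewrite (wd_zero_l hwdE _ hd) (wd_zero_l hwdF _ hd') ps_czero.
    rewrite (IH _ _ _ _ _ _ (br_closed hbrE (d:=x) _ hc I) hd); last first.
      by move: hN; rewrite subn1 /= addSn.
    by rewrite baseB.
  case: s d hd hd' hN h2 => [|s] d hd hd' hN h2.
    rewrite (br_graded hbrE (d:=x) hd I) // (br_graded hbrF (d:=(Phi x : cochain F 1)) hd' I) //.
    by rewrite (wd_zero_r hwdE _ hc) (wd_zero_r hwdF _ hc') ps_czero.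
  rewrite (IH _ _ _ _ _ _ hc (br_closed hbrE (d:=x) _ hd I)); last first.
    by move: hN; rewrite subn1 /= addnS.
  by rewrite baseB.
rewrite subn1 in key.
apply: (@detL (r + s)%N); [lia | exact: (wd_closed hwdE _ hc hd) | exact: (wd_closed hwdF _ hc' hd') | exact: key].
Qed.

End Main.

Unset Implicit Arguments. Set Strict Implicit.

Theorem mainTheorem13
  (R : comNzRingType) (QinR : {rmorphism rat -> R})
  (A B : comAlgType R) (E : lmodType A) (F : lmodType B)
  (ipE : E -> E -> A) (ipF : F -> F -> B)
  (fgpE : fg_projective E) (fgpF : fg_projective F)
  (hipE : good_inner_product ipE) (hipF : good_inner_product ipF)
  (phi : A -> B) (hphi : R_algebra_iso phi)
  (Phi : E -> F) (Psi : F -> E)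
  (Phi_add : forall x y, Phi (x + y) = Phi x + Phi y)
  (Phi_R : forall (r : R) x, Phi (rsc r x) = rsc r (Phi x))
  (Phi_along : forall (a : A) x, Phi (a *: x) = phi a *: Phi x)
  (PhiK : cancel Phi Psi) (PsiK : cancel Psi Phi)
  (Phi_isom : forall x y, phi (ipE x y) = ipF (Phi x) (Phi y))
  (brE wdE : gop E) (brF wdF : gop F)
  (hbrE : isBracket ipE brE) (hwdE : isWedge ipE brE wdE)
  (hbrF : isBracket ipF brF) (hwdF : isWedge ipF brF wdF) :
  graded_poisson_iso ipE ipF (phistar phi Phi Psi) brE wdE brF wdF.
Proof.
case: hphi => phi_add phi_mul phi1 phi_sc [g phiK gK].
case: hipF => [[bilF _] _ [ndF _] _].
have Psi_add x y : Psi (x + y) = Psi x + Psi y.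
  by apply: (can_inj PhiK); rewrite Phi_add !PsiK.
have Psi_R r x : Psi (rsc r x) = rsc r (Psi x).
  by apply: (can_inj PhiK); rewrite Phi_R !PsiK.
have g_add a b : g (a + b) = g a + g b.
  by apply: (can_inj phiK); rewrite phi_add !gK.
have g_mul a b : g (a * b) = g a * g b.
  by apply: (can_inj phiK); rewrite phi_mul !gK.
have g_sc (r : R) a : g (r *: a) = r *: g a.
  by apply: (can_inj phiK); rewrite phi_sc !gK.
have g_isom x y : g (ipF x y) = ipE (Psi x) (Psi y).
  by rewrite -{1}(PsiK x) -{1}(PsiK y) -Phi_isom phiK.
split.
- move=> n c hc. exact: (phistar_cochain phi_add phi_mul phi_sc phiK gK Phi_add Phi_R PhiK PsiK Phi_isom hc).
- case=> [|[|k]] c c' _ _ /= e.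
  + exact: (can_inj phiK).
  + exact: (can_inj PhiK).
  + apply: functional_extensionality => v.
    have := congr1 (fun f => f [ffun i => Phi (v i)]) e => /= /(can_inj PhiK).
    have -> : [ffun i => Psi ([ffun i0 => Phi (v i0)] i)] = v.
      by apply/ffunP => i; rewrite !ffunE PhiK.
    by [].
- move=> n d hd; exists (phistar g Psi Phi d).
    exact: (phistar_cochain g_add g_mul g_sc gK phiK Psi_add Psi_R PsiK PhiK g_isom hd).
  case: n d hd => [|[|k]] d hd /=; [exact: gK | exact: PsiK |].
  apply: functional_extensionality => w; rewrite PsiK.
  congr (d _); apply/ffunP => i; rewrite !ffunE PsiK.
  by [].
- move=> r s n c d hc hd.
  exact: (brC phi_add phi_mul phi_sc phiK gK Phi_add Phi_R PhiK PsiK Phi_isom ndF bilF hbrE hbrF (leqnn (r + s)) n hc hd).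
- move=> r s n c d hc hd.
  exact: (wdC phi_add phi_mul phi_sc phiK gK Phi_add Phi_R Phi_along PhiK PsiK Phi_isom ndF bilF hbrE hwdE hbrF hwdF (leqnn (r + s)) n hc hd).
Qed.
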